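(* Let $A=(0,0)$ and $B=(b_1,b_2)$ with $b_1>0$ and $0\le b_2\le b_1-1$, and let $s=b_2/b_1$ and $Q=(1-s)(1,0)+s(3/2,1/2)$. For $k\in(0,1)$ let $P_k=(1-k)(1,1)+kQ$ and $\gamma_k(t)=Bt^3+3P_kt^2(1-t)+3P_kt(1-t)^2$, $0\le t\le1$. If $k_1>k_2$ are in $(0,1)$, then the curves $\gamma_1=\gamma_{k_1}$ and $\gamma_2=\gamma_{k_2}$ do not intersect except at their common endpoints $A$ and $B$, and, except at the endpoints, $\gamma_2$ lies above $\gamma_1$.
   Context: Each $\gamma_k$ is the cubic B\'ezier curve with endpoints $A=\gamma_k(0)$, $B=\gamma_k(1)$ and both inner control points equal to $P_k$. *)

(* Defs.v *)
From HB Require Import structures.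
From mathcomp Require Import all_boot all_order all_algebra.
From mathcomp Require Import reals.
Set Implicit Arguments. Unset Strict Implicit. Unset Printing Implicit Defensive.
Import Order.TTheory GRing.Theory Num.Theory.
Local Open Scope ring_scope.

Definition pt (R : realType) := (R * R)%type.

Definition padd (R : realType) (p q : pt R) : pt R := (p.1 + q.1, p.2 + q.2).
Definition pscale (R : realType) (c : R) (p : pt R) : pt R := (c * p.1, c * p.2).

Definition bezier (R : realType) (A P B : pt R) (t : R) : pt R :=
  padd (pscale ((1 - t) ^+ 3) A)
   (padd (pscale (3 * t * (1 - t) ^+ 2) P)
    (padd (pscale (3 * t ^+ 2 * (1 - t)) P) (pscale (t ^+ 3) B))).

Definition Qpt (R : realType) (b1 b2 : R) : pt R :=
  let s := b2 / b1 in
  padd (pscale (1 - s) (1, 0)) (pscale s (3 / 2, 1 / 2)).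

Definition Ppt (R : realType) (b1 b2 k : R) : pt R :=
  padd (pscale (1 - k) (1, 1)) (pscale k (Qpt b1 b2)).

Definition gam (R : realType) (b1 b2 k : R) (t : R) : pt R :=
  bezier (0, 0) (Ppt b1 b2 k) (b1, b2) t.

(* Main.v *)
Require Import Defs.
From HB Require Import structures.
From mathcomp Require Import all_boot all_order all_algebra.
From mathcomp Require Import reals ring lra.
Import Order.TTheory GRing.Theory Num.Theory.
Local Open Scope ring_scope.

Section S.
Variable R : realType.


Lemma gx (b1 b2 k t : R) : b1 != 0 ->
  (gam b1 b2 k t).1 = 3*t*(1-t) * (1 + k*(b2/b1/2)) + t^+3 * b1.
Proof. move=> h; rewrite /gam/bezier/Ppt/Qpt/padd/pscale /=. field; by rewrite ?h ?pnatr_eq0. Qed.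
Lemma gy (b1 b2 k t : R) : b1 != 0 ->
  (gam b1 b2 k t).2 = 3*t*(1-t) * (1 - k + k*(b2/b1/2)) + t^+3 * b2.
Proof. move=> h; rewrite /gam/bezier/Ppt/Qpt/padd/pscale /=. field; by rewrite ?h ?pnatr_eq0. Qed.

Lemma Lg (k d t1 t2 : R) : 1 <= d -> 0 < k < 1 -> 0 <= t2 -> t2 < t1 -> t1 <= 1 ->
  k*(3*t2*(1-t2)) + d*t2^+3 < k*(3*t1*(1-t1)) + d*t1^+3.
Proof.
move=> hd /andP[k0 k1] h2 h21 h1.
have q: 0 < 3 - 3*(t1+t2) + (t1^+2+t1*t2+t2^+2) by nra.
have e: k*(3*t1*(1-t1)) + d*t1^+3 - (k*(3*t2*(1-t2)) + d*t2^+3)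
   = (t1-t2)*(k*(3 - 3*(t1+t2) + (t1^+2+t1*t2+t2^+2)) + (d-k)*(t1^+2+t1*t2+t2^+2)) by ring.
rewrite -subr_gt0 e; apply: mulr_gt0; first lra.
have: 0 <= (d-k)*(t1^+2+t1*t2+t2^+2) by apply: mulr_ge0; nra.
have: 0 < k*(3 - 3*(t1+t2) + (t1^+2+t1*t2+t2^+2)) by apply: mulr_gt0.
lra.
Qed.

Lemma Lf (e t1 t2 : R) : 1 <= e -> 0 <= t1 -> t1 < t2 -> t2 <= 1 ->
  3*t1*(1-t1) + e*t1^+3 < 3*t2*(1-t2) + e*t2^+3.
Proof.
move=> he h1 h12 h2.
have q: 0 < 3 - 3*(t1+t2) + (t1^+2+t1*t2+t2^+2) by nra.
have ee: 3*t2*(1-t2) + e*t2^+3 - (3*t1*(1-t1) + e*t1^+3)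
   = (t2-t1)*((3 - 3*(t1+t2) + (t1^+2+t1*t2+t2^+2)) + (e-1)*(t1^+2+t1*t2+t2^+2)) by ring.
rewrite -subr_gt0 ee; apply: mulr_gt0; first lra.
have: 0 <= (e-1)*(t1^+2+t1*t2+t2^+2) by apply: mulr_ge0; nra.
lra.
Qed.
Lemma LK (b1 b2 k1 k2 u t1 t2 : R) :
  0 <= u -> 1 <= b1 - u*(b1-b2) -> 1 <= b1 - b2 ->
  0 < k1 < 1 -> 0 < k2 < 1 -> k2 < k1 ->
  0 <= t1 <= 1 -> 0 <= t2 <= 1 ->
  3*t1*(1-t1)*(1+k1*u) + t1^+3*b1 = 3*t2*(1-t2)*(1+k2*u) + t2^+3*b1 ->
  k2*(3*t2*(1-t2)) + (b1-b2)*t2^+3 < k1*(3*t1*(1-t1)) + (b1-b2)*t1^+3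
  \/ (t1 = t2 /\ 3*t1*(1-t1) = 0).
Proof.
move=> u0 he hd hk1 hk2 hk /andP[t10 t11] /andP[t20 t21] hx.
have [k10 k11] := andP hk1; have [k20 k21] := andP hk2.
set d := b1 - b2 in hd *.
case: (ltgtP t1 t2) => [h12|h21|->].
- left; rewrite ltNge; apply/negP => hg.
  have := @Lf (b1 - u*d) t1 t2 he t10 h12 t21.
  have: 0 <= u*((k2*(3*t2*(1-t2)) + d*t2^+3) - (k1*(3*t1*(1-t1)) + d*t1^+3)).
    by apply: mulr_ge0 => //; lra.
  move: hx; rewrite /d. move=> hx h1 h2. nra.
- left; have := @Lg k2 d t1 t2 hd hk2 t20 h21 t11.
  have: 0 <= 3*t1*(1-t1) by nra.
  nra.
- have: 0 <= 3*t2*(1-t2) by nra.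
  rewrite le_eqVlt => /orP[/eqP h|h]; first by right.
  left; nra.
Qed.

Lemma main (b1 b2 k1 k2 : R) :
  0 < b1 -> 0 <= b2 -> b2 <= b1 - 1 ->
  0 < k1 < 1 -> 0 < k2 < 1 -> k2 < k1 ->
  (forall t1 t2 : R, 0 <= t1 <= 1 -> 0 <= t2 <= 1 ->
     gam b1 b2 k1 t1 = gam b1 b2 k2 t2 ->
     gam b1 b2 k1 t1 = (0, 0) \/ gam b1 b2 k1 t1 = (b1, b2)) /\
  (forall t1 t2 : R, 0 < t1 < 1 -> 0 < t2 < 1 ->
     (gam b1 b2 k1 t1).1 = (gam b1 b2 k2 t2).1 ->
     (gam b1 b2 k1 t1).2 < (gam b1 b2 k2 t2).2).
Proof.
move=> b10 b20 b21 hk1 hk2 hk.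
have bn : b1 != 0 by rewrite gt_eqF.
set u := b2/b1/2.
have u0 : 0 <= u by rewrite /u; apply: divr_ge0 => //; apply: divr_ge0 => //; lra.
have ub : u * b1 = b2/2 by rewrite /u; field.
have he : 1 <= b1 - u*(b1-b2) by nra.
have hd : 1 <= b1 - b2 by lra.
split.
- move=> t1 t2 ht1 ht2 he12.
  have hx := congr1 fst he12; have hy := congr1 snd he12.
  rewrite !gx // -/u in hx; rewrite !gy // -/u in hy.
  case: (@LK b1 b2 k1 k2 u t1 t2 u0 he hd hk1 hk2 hk ht1 ht2 hx) => [h|[e1 e2]]; first by exfalso; nra.
  have [/andP[t10 t11] _] := (ht1, ht2).
  have : t1 = 0 \/ t1 = 1.
    have: t1 * (1 - t1) = 0 by nra.
    move/eqP; rewrite mulf_eq0 subr_eq0 => /orP[/eqP->|/eqP<-]; [left|right] => //.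
  case=> ->; [left|right]; rewrite /gam/bezier/padd/pscale /=; congr pair; ring.
- move=> t1 t2 /andP[t10 t11] /andP[t20 t21] hx.
  rewrite !gx // -/u in hx; rewrite !gy // -/u.
  have ht1 : 0 <= t1 <= 1 by apply/andP; split; lra.
  have ht2 : 0 <= t2 <= 1 by apply/andP; split; lra.
  case: (@LK b1 b2 k1 k2 u t1 t2 u0 he hd hk1 hk2 hk ht1 ht2 hx) => [h|[e1 e2]]; last by exfalso; nra.
  nra.
Qed.
End S.

Theorem lemma8 (R : realType) (b1 b2 k1 k2 : R) :
  0 < b1 -> 0 <= b2 -> b2 <= b1 - 1 ->
  0 < k1 < 1 -> 0 < k2 < 1 -> k2 < k1 ->
  (forall t1 t2 : R, 0 <= t1 <= 1 -> 0 <= t2 <= 1 ->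
     gam b1 b2 k1 t1 = gam b1 b2 k2 t2 ->
     gam b1 b2 k1 t1 = (0, 0) \/ gam b1 b2 k1 t1 = (b1, b2)) /\
  (forall t1 t2 : R, 0 < t1 < 1 -> 0 < t2 < 1 ->
     (gam b1 b2 k1 t1).1 = (gam b1 b2 k2 t2).1 ->
     (gam b1 b2 k1 t1).2 < (gam b1 b2 k2 t2).2).
Proof. exact: main. Qed.
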